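(* Let $F$ be a finite type and let $\mathcal V$ be a discriminator variety of Cornish algebras of type $F$. Then $\mathcal V$ is the variety generated by some finite set of quasi-primal Cornish algebras of type $F$ that share a common ternary discriminator term.
   Context: Let $F=F^+\,\dot\cup\,F^-$ be a set of unary operation symbols. A Cornish algebra of type $F$ is an algebra $\mathbf A=\langle A;\vee,\wedge,\{f^{\mathbf A}\}_{f\in F},0,1\rangle$ such that $\langle A;\vee,\wedge,0,1\rangle$ is a bounded distributive lattice, $f^{\mathbf A}$ is an endomorphism of this bounded lattice for $f\in F^+$, and a dual endomorphism (order-reversing, interchanging $\vee$ with $\wedge$ and $0$ with $1$) for $f\in F^-$. The ternary discriminator on $A$ is $\tau(x,y,z)=x$ if $x\ne y$, $=z$ if $x=y$. A variety is a discriminator variety if some ternary term induces $\tau$ on every subdirectly irreducible member. A finite algebra is quasi-primal if $\tau$ is one of its term functions; a family shares a common ternary discriminator term if a single ternary term induces $\tau$ on each member. *)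

(* Defs.v *)
From mathcomp Require Import all_boot.
From Stdlib Require List.
Set Implicit Arguments.
Unset Strict Implicit.
Unset Printing Implicit Defensive.

(** Type F = F^+ \dot\cup F^- : a finite set of unary symbols, with
    [pos f = true] iff f \in F^+ (so f \in F^- iff pos f = false). *)

Record CornishAlg (F : finType) (pos : pred F) := {
  carrier :> Type;
  join : carrier -> carrier -> carrier;
  meet : carrier -> carrier -> carrier;
  op : F -> carrier -> carrier;
  bot : carrier;
  top : carrier;
  joinA : forall x y z, join x (join y z) = join (join x y) z;
  meetA : forall x y z, meet x (meet y z) = meet (meet x y) z;
  joinC : forall x y, join x y = join y x;
  meetC : forall x y, meet x y = meet y x;
  join_meetK : forall x y, join x (meet x y) = x;
  meet_joinK : forall x y, meet x (join x y) = x;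
  meet_joinDr : forall x y z, meet x (join y z) = join (meet x y) (meet x z);
  join0x : forall x, join bot x = x;
  meet1x : forall x, meet top x = x;
  op_pos_join : forall f x y, pos f -> op f (join x y) = join (op f x) (op f y);
  op_pos_meet : forall f x y, pos f -> op f (meet x y) = meet (op f x) (op f y);
  op_pos_bot : forall f, pos f -> op f bot = bot;
  op_pos_top : forall f, pos f -> op f top = top;
  op_neg_join : forall f x y, ~~ pos f -> op f (join x y) = meet (op f x) (op f y);
  op_neg_meet : forall f x y, ~~ pos f -> op f (meet x y) = join (op f x) (op f y);
  op_neg_bot : forall f, ~~ pos f -> op f bot = top;
  op_neg_top : forall f, ~~ pos f -> op f top = bot
}.

Inductive term (F : Type) (X : Type) :=
| tVar : X -> term F X
| tJoin : term F X -> term F X -> term F X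
| tMeet : term F X -> term F X -> term F X
| tOp : F -> term F X -> term F X
| tBot : term F X
| tTop : term F X.

Fixpoint eval (F : finType) (pos : pred F) (A : CornishAlg pos) (X : Type)
  (rho : X -> A) (t : term F X) : A :=
  match t with
  | tVar x => rho x
  | tJoin s u => join (eval rho s) (eval rho u)
  | tMeet s u => meet (eval rho s) (eval rho u)
  | tOp f s => op f (eval rho s)
  | tBot => bot A
  | tTop => top A
  end.

Definition identity (F : Type) := (term F nat * term F nat)%type.

Definition satisfies (F : finType) (pos : pred F) (A : CornishAlg pos)
  (e : identity F) : Prop :=
  forall rho : nat -> A, eval rho e.1 = eval rho e.2.

(** A variety of Cornish algebras of type F: an equational class, i.e. the
    class of all Cornish algebras satisfying a set of identities
    (equivalently, by Birkhoff, a class closed under H, S, P). *)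
Definition is_variety (F : finType) (pos : pred F)
  (V : CornishAlg pos -> Prop) : Prop :=
  exists Sigma : identity F -> Prop,
    forall A, V A <-> (forall e, Sigma e -> satisfies A e).

(** The variety generated by a class K: Mod(Id(K)) (= HSP(K) by Birkhoff). *)
Definition generated_variety (F : finType) (pos : pred F)
  (K : CornishAlg pos -> Prop) (A : CornishAlg pos) : Prop :=
  forall e : identity F, (forall B, K B -> satisfies B e) -> satisfies A e.

Definition congruence (F : finType) (pos : pred F) (A : CornishAlg pos)
  (theta : A -> A -> Prop) : Prop :=
  [/\ (forall x, theta x x),
      (forall x y, theta x y -> theta y x),
      (forall x y z, theta x y -> theta y z -> theta x z),
      (forall x x' y y', theta x x' -> theta y y' ->
          theta (join x y) (join x' y') /\ theta (meet x y) (meet x' y'))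
    & (forall f x x', theta x x' -> theta (op f x) (op f x'))].

(** A is subdirectly irreducible iff it is nontrivial and has a monolith:
    a pair (a, b), a <> b, contained in every non-identity congruence. *)
Definition subdirectly_irreducible (F : finType) (pos : pred F)
  (A : CornishAlg pos) : Prop :=
  exists a b : A, a <> b /\
    forall theta, congruence theta ->
      (exists x y, theta x y /\ x <> y) -> theta a b.

Definition induces_discriminator (F : finType) (pos : pred F)
  (A : CornishAlg pos) (t : term F 'I_3) : Prop :=
  forall rho : 'I_3 -> A,
    let x := rho ord0 in let y := rho (inord 1) in let z := rho (inord 2) in
    (x <> y -> eval rho t = x) /\ (x = y -> eval rho t = z).

Definition discriminator_variety (F : finType) (pos : pred F)
  (V : CornishAlg pos -> Prop) : Prop :=
  is_variety V /\
  exists t : term F 'I_3,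
    forall A, V A -> subdirectly_irreducible A -> induces_discriminator A t.

Definition finite_alg (F : finType) (pos : pred F) (A : CornishAlg pos) : Prop :=
  exists s : list A, forall x : A, List.In x s.

Definition quasi_primal (F : finType) (pos : pred F) (A : CornishAlg pos) : Prop :=
  finite_alg A /\ exists t : term F 'I_3, induces_discriminator A t.

(* Main.v *)
Require Import Defs.
From mathcomp Require Import all_boot.
From mathcomp Require Import boolp.
From mathcomp Require classical_sets.
From Stdlib Require List.
Set Implicit Arguments.
Unset Strict Implicit.
Unset Printing Implicit Defensive.

Section Lat.
Variables (F : finType) (pos : pred F) (A : CornishAlg pos).
Implicit Types x y z : A.

Lemma meetxx x : meet x x = x.
Proof. by rewrite -{2}(join_meetK x x) meet_joinK. Qed.
Lemma joinxx x : join x x = x.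
Proof. by rewrite -{2}(meet_joinK x x) join_meetK. Qed.
Lemma meet0x x : meet (bot A) x = bot A.
Proof. by rewrite -{1}(join0x x) meet_joinK. Qed.
Lemma meetx0 x : meet x (bot A) = bot A.
Proof. by rewrite meetC meet0x. Qed.
Lemma join1x x : join (top A) x = top A.
Proof. by rewrite -{1}(meet1x x) join_meetK. Qed.
Lemma joinx1 x : join x (top A) = top A.
Proof. by rewrite joinC join1x. Qed.
Lemma joinx0 x : join x (bot A) = x.
Proof. by rewrite joinC join0x. Qed.
Lemma meetx1 x : meet x (top A) = x.
Proof. by rewrite meetC meet1x. Qed.
Lemma meet_joinDl x y z : meet (join y z) x = join (meet y x) (meet z x).
Proof. by rewrite meetC meet_joinDr (meetC x) (meetC x). Qed.
Lemma meet_joinK' x y : meet (join x y) x = x.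
Proof. by rewrite meetC meet_joinK. Qed.
Lemma meet_joinK2 x y : meet x (join y x) = x.
Proof. by rewrite joinC meet_joinK. Qed.
Lemma join_meetK2 x y : join x (meet y x) = x.
Proof. by rewrite meetC join_meetK. Qed.

Definition le x y := meet x y = x.
Lemma leE x y : le x y <-> join x y = y.
Proof.
split=> h; first by rewrite -h joinC meetC join_meetK.
by rewrite /le -h meet_joinK.
Qed.
Lemma le_trans x y z : le x y -> le y z -> le x z.
Proof. by rewrite /le => h1 h2; rewrite -h1 -meetA h2. Qed.
Lemma le_meetl x y : le (meet x y) x.
Proof. by rewrite /le meetC meetA meetxx. Qed.
Lemma le_meetr x y : le (meet x y) y.
Proof. by rewrite /le -meetA meetxx. Qed.
Lemma le_joinl x y : le x (join x y).
Proof. exact: meet_joinK. Qed.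
Lemma le_glb x y z : le z x -> le z y -> le z (meet x y).
Proof. by rewrite /le => h1 h2; rewrite meetA h1 h2. Qed.
Lemma le0 x : le (bot A) x.
Proof. exact: meet0x. Qed.
Lemma le1 x : le x (top A).
Proof. exact: meetx1. Qed.
Lemma le_meet2 x y x' y' : le x x' -> le y y' -> le (meet x y) (meet x' y').
Proof.
move=> h1 h2; apply: le_glb.
  exact: le_trans (le_meetl _ _) h1.
exact: le_trans (le_meetr _ _) h2.
Qed.
Lemma le_antisym x y : le x y -> le y x -> x = y.
Proof. by rewrite /le => h1 h2; rewrite -h1 meetC h2. Qed.

Lemma bot_top_trivial : bot A = top A -> forall x y : A, x = y.
Proof. by move=> h x y; rewrite -(meet1x x) -(meet1x y) -h !meet0x. Qed.

End Lat.

Section Words.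
Variables (F : finType) (pos : pred F) (A : CornishAlg pos).
Definition app (w : seq F) (x : A) := foldr (fun f a => op f a) x w.
Definition par (w : seq F) := odd (count (fun f => ~~ pos f) w).

Lemma app_jm w x y :
  app w (join x y) = (if par w then meet (app w x) (app w y) else join (app w x) (app w y)) /\
  app w (meet x y) = (if par w then join (app w x) (app w y) else meet (app w x) (app w y)).
Proof.
elim: w => [|f w [IH1 IH2]] //=.
have hp : par (f :: w) = (~~ pos f) (+) par w by rewrite /par /= oddD oddb.
rewrite hp IH1 IH2.
case pf: (pos f) => /=; case: (par w) => /=.
- by rewrite op_pos_join ?op_pos_meet ?pf.
- by rewrite op_pos_join ?op_pos_meet ?pf.
- by rewrite op_neg_join ?op_neg_meet ?pf.
- by rewrite op_neg_join ?op_neg_meet ?pf.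
Qed.
Lemma app_join w x y :
  app w (join x y) = (if par w then meet (app w x) (app w y) else join (app w x) (app w y)).
Proof. by case: (app_jm w x y). Qed.
Lemma app_meet w x y :
  app w (meet x y) = (if par w then join (app w x) (app w y) else meet (app w x) (app w y)).
Proof. by case: (app_jm w x y). Qed.
Lemma app_rcons w f x : app (rcons w f) x = app w (op f x).
Proof. by elim: w => //= g w ->. Qed.
End Words.

Section Hom.
Variables (F : finType) (pos : pred F).
Definition hom (A B : CornishAlg pos) (g : A -> B) :=
  [/\ forall x y, g (join x y) = join (g x) (g y),
      forall x y, g (meet x y) = meet (g x) (g y),
      forall f x, g (op f x) = op f (g x),
      g (bot A) = bot B & g (top A) = top B].

Lemma eval_hom (A B : CornishAlg pos) (g : A -> B) (X : Type) (rho : X -> A) s :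
  hom g -> g (eval rho s) = eval (fun x => g (rho x)) s.
Proof.
case=> hj hm ho hb ht; elim: s => //= [s1 IH1 s2 IH2|s1 IH1 s2 IH2|f s IH].
- by rewrite hj IH1 IH2.
- by rewrite hm IH1 IH2.
- by rewrite ho IH.
Qed.

Lemma hom_surj_sat (A B : CornishAlg pos) (g : A -> B) e :
  hom g -> (forall b, exists a, g a = b) -> satisfies A e -> satisfies B e.
Proof.
move=> hg sg sA rho.
pose r n := proj1_sig (cid (sg (rho n))).
have hr n : g (r n) = rho n by rewrite /r; case: cid.
have -> : rho = (fun n => g (r n)) by apply: funext => n; rewrite hr.
by rewrite -!eval_hom // sA.
Qed.

Lemma hom_inj_sat (A B : CornishAlg pos) (g : A -> B) e :
  hom g -> injective g -> satisfies B e -> satisfies A e.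
Proof. by move=> hg ig sB rho; apply: ig; rewrite !eval_hom // sB. Qed.
End Hom.

Lemma cid_ext (T : Type) (P Q : T -> Prop) (hp : exists x, P x) (hq : exists x, Q x) :
  P = Q -> proj1_sig (cid hp) = proj1_sig (cid hq).
Proof. by move=> E; subst Q; rewrite (Prop_irrelevance hp hq). Qed.

Section Quot.
Variables (F : finType) (pos : pred F) (A : CornishAlg pos) (th : A -> A -> Prop).
Hypothesis hth : congruence th.

Let threfl : forall x, th x x. Proof. by case: hth. Qed.
Let thsym : forall x y, th x y -> th y x. Proof. by case: hth. Qed.
Let thtrans : forall x y z, th x y -> th y z -> th x z. Proof. by case: hth. Qed.
Let thjm : forall x x' y y', th x x' -> th y y' ->
          th (join x y) (join x' y') /\ th (meet x y) (meet x' y').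
Proof. by case: hth. Qed.
Let thop : forall f x x', th x x' -> th (op f x) (op f x'). Proof. by case: hth. Qed.

Definition canon (x : A) : A := proj1_sig (cid (ex_intro (th x) x (threfl x))).
Lemma canon_rel x : th x (canon x).
Proof. by rewrite /canon; case: cid. Qed.
Lemma canon_eq x y : th x y -> canon x = canon y.
Proof.
move=> hxy; apply: cid_ext; apply: funext => z; apply: propext; split => h.
  exact: thtrans (thsym hxy) h.
exact: thtrans hxy h.
Qed.
Lemma canon_idem x : canon (canon x) = canon x.
Proof. by apply/esym/canon_eq/canon_rel. Qed.

Definition Qc := {x : A | canon x = x}.
Definition qpi (x : A) : Qc := exist _ (canon x) (canon_idem x).

Lemma val_inj_Q (p q : Qc) : proj1_sig p = proj1_sig q -> p = q.
Proof. by case: p q => [x hx] [y hy] /= E; subst y; rewrite (Prop_irrelevance hx hy). Qed.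

Lemma qpiE x y : qpi x = qpi y <-> th x y.
Proof.
split=> [E|h]; last by apply: val_inj_Q => /=; exact: canon_eq.
have E' : canon x = canon y by move: E => /(congr1 (@proj1_sig _ _)).
by apply: thtrans (canon_rel x) _; rewrite E'; apply: thsym; apply: canon_rel.
Qed.
Lemma qpi_val (p : Qc) : qpi (proj1_sig p) = p.
Proof. by apply: val_inj_Q => /=; case: p. Qed.
Lemma rel_qpi_val x : th (proj1_sig (qpi x)) x.
Proof. by apply: thsym; apply: canon_rel. Qed.

Definition jQ (p q : Qc) := locked qpi (join (proj1_sig p) (proj1_sig q)).
Definition mQ (p q : Qc) := locked qpi (meet (proj1_sig p) (proj1_sig q)).
Definition oQ f (p : Qc) := locked qpi (op f (proj1_sig p)).
Definition bQ := qpi (bot A).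
Definition tQ := qpi (top A).

Lemma qpi_join x y : jQ (qpi x) (qpi y) = qpi (join x y).
Proof. rewrite /jQ /mQ -lock. by apply/qpiE; case: (thjm (rel_qpi_val x) (rel_qpi_val y)). Qed.
Lemma qpi_meet x y : mQ (qpi x) (qpi y) = qpi (meet x y).
Proof. rewrite /jQ /mQ -lock. by apply/qpiE; case: (thjm (rel_qpi_val x) (rel_qpi_val y)). Qed.
Lemma qpi_op f x : oQ f (qpi x) = qpi (op f x).
Proof. rewrite /oQ -lock. by apply/qpiE; apply: thop; exact: rel_qpi_val. Qed.

Ltac qsimp := repeat match goal with p : Qc |- _ => rewrite -(qpi_val p); move: (proj1_sig p); clear p => p end;
  rewrite /bQ /tQ ?qpi_join ?qpi_meet ?qpi_op ?qpi_join ?qpi_meet ?qpi_op ?qpi_join ?qpi_meet ?qpi_op.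

Lemma QjoinA p q r : jQ p (jQ q r) = jQ (jQ p q) r.
Proof. by qsimp; rewrite joinA. Qed.
Lemma QmeetA p q r : mQ p (mQ q r) = mQ (mQ p q) r.
Proof. by qsimp; rewrite meetA. Qed.
Lemma QjoinC p q : jQ p q = jQ q p.
Proof. by qsimp; rewrite joinC. Qed.
Lemma QmeetC p q : mQ p q = mQ q p.
Proof. by qsimp; rewrite meetC. Qed.
Lemma Qjoin_meetK p q : jQ p (mQ p q) = p.
Proof. by qsimp; rewrite join_meetK. Qed.
Lemma Qmeet_joinK p q : mQ p (jQ p q) = p.
Proof. by qsimp; rewrite meet_joinK. Qed.
Lemma Qmeet_joinDr p q r : mQ p (jQ q r) = jQ (mQ p q) (mQ p r).
Proof. by qsimp; rewrite meet_joinDr. Qed.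
Lemma Qjoin0x p : jQ bQ p = p.
Proof. by qsimp; rewrite join0x. Qed.
Lemma Qmeet1x p : mQ tQ p = p.
Proof. by qsimp; rewrite meet1x. Qed.
Lemma Qop_pos_join f p q : pos f -> oQ f (jQ p q) = jQ (oQ f p) (oQ f q).
Proof. by move=> hf; qsimp; rewrite op_pos_join. Qed.
Lemma Qop_pos_meet f p q : pos f -> oQ f (mQ p q) = mQ (oQ f p) (oQ f q).
Proof. by move=> hf; qsimp; rewrite op_pos_meet. Qed.
Lemma Qop_pos_bot f : pos f -> oQ f bQ = bQ.
Proof. by move=> hf; qsimp; rewrite op_pos_bot. Qed.
Lemma Qop_pos_top f : pos f -> oQ f tQ = tQ.
Proof. by move=> hf; qsimp; rewrite op_pos_top. Qed.
Lemma Qop_neg_join f p q : ~~ pos f -> oQ f (jQ p q) = mQ (oQ f p) (oQ f q).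
Proof. by move=> hf; qsimp; rewrite op_neg_join. Qed.
Lemma Qop_neg_meet f p q : ~~ pos f -> oQ f (mQ p q) = jQ (oQ f p) (oQ f q).
Proof. by move=> hf; qsimp; rewrite op_neg_meet. Qed.
Lemma Qop_neg_bot f : ~~ pos f -> oQ f bQ = tQ.
Proof. by move=> hf; qsimp; rewrite op_neg_bot. Qed.
Lemma Qop_neg_top f : ~~ pos f -> oQ f tQ = bQ.
Proof. by move=> hf; qsimp; rewrite op_neg_top. Qed.

Definition Qalg : CornishAlg pos :=
  Build_CornishAlg QjoinA QmeetA QjoinC QmeetC Qjoin_meetK Qmeet_joinK Qmeet_joinDr
    Qjoin0x Qmeet1x Qop_pos_join Qop_pos_meet Qop_pos_bot Qop_pos_top
    Qop_neg_join Qop_neg_meet Qop_neg_bot Qop_neg_top.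

Lemma qpi_hom : hom (qpi : A -> Qalg).
Proof.
split=> //= [x y|x y|f x]; by rewrite ?qpi_join ?qpi_meet ?qpi_op.
Qed.

Lemma qpi_surj (p : Qalg) : exists x, qpi x = p.
Proof. by exists (proj1_sig p); exact: qpi_val. Qed.

Lemma lift_cong (Th : Qalg -> Qalg -> Prop) :
  congruence Th -> congruence (fun x y => Th (qpi x) (qpi y)).
Proof.
case=> r s t jm o; split.
- by move=> x; exact: r.
- by move=> x y; exact: s.
- by move=> x y z; exact: t.
- move=> x x' y y' h1 h2; case: (jm _ _ _ _ h1 h2) => /= h3 h4.
  by rewrite -!qpi_join -!qpi_meet.
- by move=> f x x' h; rewrite -!qpi_op; exact: o.
Qed.

End Quot.

Section MaxCong.
Variables (F : finType) (pos : pred F) (A : CornishAlg pos) (a b : A).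

Definition relX (X : classical_sets.set (A * A)) (x y : A) := x = y \/ X (x, y).
Definition PC (X : classical_sets.set (A * A)) := congruence (relX X) /\ ~ X (a, b).

Lemma PC_chain (Fm : classical_sets.set (classical_sets.set (A * A))) :
  classical_sets.subset Fm PC -> classical_sets.total_on Fm classical_sets.subset ->
  PC (classical_sets.bigcup Fm id).
Proof.
move=> sub tot.
have memU X p : Fm X -> X p -> classical_sets.bigcup Fm id p.
  by move=> hX hp; exists X.
have relU X x y : Fm X -> relX X x y -> relX (classical_sets.bigcup Fm id) x y.
  by move=> hX [->|h]; [left|right; exact: memU h].
have two X1 X2 p1 p2 : Fm X1 -> Fm X2 -> X1 p1 -> X2 p2 -> exists2 X, Fm X & X p1 /\ X p2.
  move=> h1 h2 q1 q2; case: (tot _ _ h1 h2) => s.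
    by exists X2 => //; split => //; apply: s.
  by exists X1 => //; split => //; apply: s.
split; last by case=> X hX /= hab; case: (sub _ hX) => _; apply.
split.
- by move=> x; left.
- move=> x y [->|[X hX hxy]]; first by left.
  case: (sub _ hX) => [[_ s _ _ _] _]; apply: (relU X) => //.
  by apply: s; right.
- move=> x y z h1 h2; case: h1 => [->|[X1 h1 q1]] //.
  case: h2 => [<-|[X2 h2 q2]]; first by right; exists X1.
  case: (two _ _ _ _ h1 h2 q1 q2) => X hX [r1 r2].
  case: (sub _ hX) => [[_ _ t _ _] _]; apply: (relU X) => //.
  by apply: (t _ y); right.
- move=> x x' y y' h1 h2.
  have H : (x = x' /\ y = y') \/
      exists2 X, Fm X & relX X x x' /\ relX X y y'.
    case: h1 => [<-|[X1 hX1 q1]]; case: h2 => [<-|[X2 hX2 q2]].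
    + by left.
    + by right; exists X2 => //; split; [left|right].
    + by right; exists X1 => //; split; [right|left].
    + case: (two _ _ _ _ hX1 hX2 q1 q2) => X hX [r1 r2].
      by right; exists X => //; split; right.
  case: H => [[E1 E2]|[X hX [r1 r2]]].
  + by subst; split; left.
  + case: (sub _ hX) => [[_ _ _ jm _] _]; case: (jm _ _ _ _ r1 r2) => c1 c2.
    by split; apply: (relU X).
- move=> f x x' [<-|[X hX q]]; first by left.
  case: (sub _ hX) => [[_ _ _ _ o] _]; apply: (relU X) => //.
  by apply: o; right.
Qed.

Lemma max_cong : a <> b -> exists th : A -> A -> Prop,
  [/\ congruence th, ~ th a b &
    forall th', congruence th' -> (forall x y, th x y -> th' x y) ->
      (exists x y, th' x y /\ ~ th x y) -> th' a b].
Proof.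
move=> nab; have [M [[cM nM] maxM]] := classical_sets.Zorn_bigcup PC_chain.
exists (relX M); split => //; first by case=> // /nab.
move=> th' c' sub [x [y [hxy nxy]]].
case: (pselect (th' a b)) => // nab'.
exfalso; apply: (maxM (fun p => th' p.1 p.2)).
  split.
    by move=> [u v] h; apply: (sub u v); right.
  move=> h; apply: nxy; right; exact: (h (x, y)).
case: c' => r s t jm o.
have e u v : relX (fun p => th' p.1 p.2) u v <-> th' u v.
  split; first by case=> [->|] //; exact: r.
  by move=> h; right.
split; last by [].
split.
- by move=> u; left.
- by move=> u v /e h; apply/e; exact: s.
- by move=> u v w /e h1 /e h2; apply/e; exact: t h1 h2.
- move=> u u' v v' /e h1 /e h2; case: (jm _ _ _ _ h1 h2) => c1 c2.
  by split; apply/e.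
- by move=> f u u' /e h; apply/e; exact: o.
Qed.
End MaxCong.

Section Prime.
Variables (F : finType) (pos : pred F) (A : CornishAlg pos).
Hypothesis nt : bot A <> top A.

Definition filt (G : A -> Prop) :=
  (forall x y, G x -> G y -> G (meet x y)) /\ (forall x y, G x -> G (join x y)).
Definition Gof (X : classical_sets.set A) z := z = top A \/ X z.
Definition PF (X : classical_sets.set A) := filt (Gof X) /\ ~ X (bot A).

Lemma PF_chain (Fm : classical_sets.set (classical_sets.set A)) :
  classical_sets.subset Fm PF -> classical_sets.total_on Fm classical_sets.subset ->
  PF (classical_sets.bigcup Fm id).
Proof.
move=> sub tot.
have GU X z : Fm X -> Gof X z -> Gof (classical_sets.bigcup Fm id) z.
  by move=> hX [->|h]; [left|right; exists X].
split; last by case=> X hX hb; case: (sub _ hX) => _; apply.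
split.
- move=> x y [->|[X1 h1 q1]] [->|[X2 h2 q2]].
  + by left; rewrite meetxx.
  + case: (sub _ h2) => [[m _] _]; apply: (GU X2) => //; apply: m; [left|right] => //.
  + case: (sub _ h1) => [[m _] _]; apply: (GU X1) => //; apply: m; [right|left] => //.
  + case: (tot _ _ h1 h2) => s.
      case: (sub _ h2) => [[m _] _]; apply: (GU X2) => //; apply: m; right => //.
      exact: s q1.
    case: (sub _ h1) => [[m _] _]; apply: (GU X1) => //; apply: m; right => //.
    exact: s q2.
- move=> x y [->|[X hX q]]; first by left; rewrite join1x.
  case: (sub _ hX) => [[_ u] _]; apply: (GU X) => //; apply: u; by right.
Qed.

Lemma prime_hom : exists h : A -> bool,
  [/\ forall x y, h (join x y) = h x || h y, forall x y, h (meet x y) = h x && h y,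
      h (bot A) = false & h (top A) = true].
Proof.
have [M [[[mM uM] nM] maxM]] := classical_sets.Zorn_bigcup PF_chain.
pose G := Gof M.
have nGb : ~ G (bot A) by case=> // /nt.
have Gx x y : G (meet x y) -> G x.
  by move=> /(uM _ x); rewrite joinC join_meetK.
have Gy x y : G (meet x y) -> G y.
  by rewrite meetC; exact: Gx.
have Gj x y : G x -> G (join x y) by exact: uM.
have prime x y : G (join x y) -> G x \/ G y.
  move=> hj; case: (pselect (G x)) => gx; first by left.
  case: (pselect (G y)) => gy; first by right.
  exfalso.
  have key z : ~ G z -> exists2 m, G m & meet m z = bot A.
    move=> gz; pose Gz := fun w => exists2 m, G m & le (meet m z) w.
    case: (pselect (Gz (bot A))) => [[m hm hle]|ngz].
      by exists m => //; apply: le_antisym hle _; exact: le0.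
    exfalso; apply: (maxM Gz).
      split.
        by move=> w hw; exists w; [right|exact: le_meetl].
      move=> h; apply: gz; have : Gz z.
        by exists (top A); [left|rewrite meet1x /le meetxx].
      by move/h; right.
    have GzT : Gz (top A) by exists (top A); [left|exact: le1].
    split => //; split.
      move=> u v hu hv.
      have {}hu : Gz u by case: hu => [->|].
      have {}hv : Gz v by case: hv => [->|].
      right; case: hu => m1 h1 l1; case: hv => m2 h2 l2.
      exists (meet m1 m2); first exact: mM.
      apply: le_glb.
        apply: le_trans l1; apply: le_meet2; [exact: le_meetl|by rewrite /le meetxx].
      apply: le_trans l2; apply: le_meet2; [exact: le_meetr|by rewrite /le meetxx].
    move=> u v hu; have {}hu : Gz u by case: hu => [->|].
    right; case: hu => m h l; exists m => //; apply: le_trans l _; exact: le_joinl.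
  case: (key x gx) => m1 h1 e1; case: (key y gy) => m2 h2 e2.
  apply: nGb.
  have : G (meet (meet m1 m2) (join x y)) by apply: (mM _ _) => //; apply: (mM _ _).
  rewrite meet_joinDr.
  have -> : meet (meet m1 m2) x = bot A.
    by rewrite (meetC m1) -meetA e1 meetx0.
  have -> : meet (meet m1 m2) y = bot A.
    by rewrite -meetA e2 meetx0.
  by rewrite joinxx.
exists (fun z => `[< G z >]); split.
- move=> x y; apply/asboolP/orP => [/prime [h|h]|[/asboolP h|/asboolP h]].
  + by left; apply/asboolP.
  + by right; apply/asboolP.
  + exact: Gj.
  + by rewrite joinC; exact: Gj.
- move=> x y; apply/asboolP/andP => [h|[/asboolP h1 /asboolP h2]].
  + by split; apply/asboolP; [exact: Gx h|exact: Gy h].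
  + exact: (mM _ _ h1 h2).
- by apply/asboolP.
- by apply/asboolP; left.
Qed.
End Prime.

Fixpoint depth (F X : Type) (s : term F X) : nat :=
  match s with
  | tVar _ => 0
  | tJoin s1 s2 => maxn (depth s1) (depth s2)
  | tMeet s1 s2 => maxn (depth s1) (depth s2)
  | tOp _ s => (depth s).+1
  | tBot => 0
  | tTop => 0
  end.

Fixpoint allwords (F : finType) (n : nat) : seq (seq F) :=
  if n is n'.+1 then [::] :: [seq f :: w | f <- enum F, w <- allwords F n'] else [:: [::]].

Lemma allwordsP (F : finType) n (w : seq F) : size w <= n -> w \in allwords F n.
Proof.
elim: n w => [|n IH] [|f w] //= hs.
rewrite inE; apply/orP; right; apply: (allpairs_f (fun f w => f :: w)).
  by rewrite mem_enum.
exact: IH.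
Qed.

Definition rho3 (T : Type) (x y z : T) (i : 'I_3) : T :=
  if val i == 0 then x else if val i == 1 then y else z.

Lemma disc3 (F : finType) (pos : pred F) (A : CornishAlg pos) t :
  induces_discriminator A t -> forall x y z : A,
    (x <> y -> eval (rho3 x y z) t = x) /\ (x = y -> eval (rho3 x y z) t = z).
Proof.
move=> hd x y z; have := hd (rho3 x y z); rewrite /rho3 /=.
by rewrite !inordK.
Qed.

Section Inj.
Variables (F : finType) (pos : pred F) (A : CornishAlg pos) (h : A -> bool).
Hypothesis hj : forall x y, h (join x y) = h x || h y.
Hypothesis hm : forall x y, h (meet x y) = h x && h y.

Definition agree n (p q : A) := forall w, size w <= n -> h (app w p) = h (app w q).

Lemma agree_sym n p q : agree n p q -> agree n q p.
Proof. by move=> ag w hw; rewrite ag. Qed.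

Lemma agree_le m n p q : m <= n -> agree n p q -> agree m p q.
Proof. by move=> le ag w hw; apply: ag; exact: leq_trans hw le. Qed.

Lemma agree_eval (X : Type) (s : term F X) : forall n (rho rho' : X -> A),
  (forall x, agree (n + depth s) (rho x) (rho' x)) -> agree n (eval rho s) (eval rho' s).
Proof.
elim: s => [x|s1 IH1 s2 IH2|s1 IH1 s2 IH2|f s IH||] n rho rho' ag /=.
- by move: (ag x); rewrite addn0.
- move=> w hw; rewrite !app_join; case: (par pos w); rewrite ?hj ?hm.
  + rewrite (IH1 n rho rho') // ?(IH2 n rho rho') //.
      by move=> x; apply: agree_le (ag x); rewrite leq_add2l leq_maxr.
    by move=> x; apply: agree_le (ag x); rewrite leq_add2l leq_maxl.
  + rewrite (IH1 n rho rho') // ?(IH2 n rho rho') //.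
      by move=> x; apply: agree_le (ag x); rewrite leq_add2l leq_maxr.
    by move=> x; apply: agree_le (ag x); rewrite leq_add2l leq_maxl.
- move=> w hw; rewrite !app_meet; case: (par pos w); rewrite ?hj ?hm.
  + rewrite (IH1 n rho rho') // ?(IH2 n rho rho') //.
      by move=> x; apply: agree_le (ag x); rewrite leq_add2l leq_maxr.
    by move=> x; apply: agree_le (ag x); rewrite leq_add2l leq_maxl.
  + rewrite (IH1 n rho rho') // ?(IH2 n rho rho') //.
      by move=> x; apply: agree_le (ag x); rewrite leq_add2l leq_maxr.
    by move=> x; apply: agree_le (ag x); rewrite leq_add2l leq_maxl.
- move=> w hw; rewrite -!app_rcons; apply: (IH n.+1 rho rho').
    by move=> x; move: (ag x); rewrite addSnnS.
  by rewrite size_rcons.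
- by [].
- by [].
Qed.
End Inj.

Definition nwords (F : finType) (t : term F 'I_3) := size (allwords F (2 * depth t)).
Notation code_space t := {ffun 'I_(nwords t) -> bool}.

Lemma embed (F : finType) (pos : pred F) (A : CornishAlg pos) (t : term F 'I_3) :
  induces_discriminator A t -> bot A <> top A ->
  exists iota : A -> code_space t, injective iota.
Proof.
move=> hd nt; have [h [hj hm hb ht]] := prime_hom nt.
pose ws := allwords F (2 * depth t).
exists (fun x => [ffun i : 'I_(nwords t) => h (app (nth [::] ws i) x)]).
move=> x y E.
have ag : agree h (2 * depth t) x y.
  move=> w hw; have wi : w \in ws by exact: allwordsP.
  have hi : index w ws < nwords t by rewrite /nwords index_mem.
  move: (congr1 (fun g : code_space t => g (Ordinal hi)) E) => /=.
  by rewrite !ffunE /= nth_index.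
pose E2 u v := eval (rho3 (eval (rho3 u v (bot A)) t) (eval (rho3 u v (top A)) t) (top A)) t.
have agE : agree h 0 (E2 x y) (E2 x x).
  apply: agree_eval => //= i.
  have inner : forall z, agree h (depth t) (eval (rho3 x y z) t) (eval (rho3 x x z) t).
    move=> z; apply: agree_eval => // j; rewrite /rho3.
    case: ifP => _; first by [].
    case: ifP => _; last by [].
    by apply: agree_sym; apply: agree_le ag; rewrite mul2n -addnn.
  rewrite /rho3; case: ifP => _; first exact: inner.
  case: ifP => _; first exact: inner.
  by [].
have Exx : E2 x x = bot A.
  rewrite /E2; have [_ d1] := disc3 hd x x (bot A); rewrite d1 //.
  have [_ d2] := disc3 hd x x (top A); rewrite d2 //.
  have [d3 _] := disc3 hd (bot A) (top A) (top A); exact: d3.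
case: (pselect (x = y)) => // nxy; exfalso.
have Exy : E2 x y = top A.
  rewrite /E2; have [d1 _] := disc3 hd x y (bot A); rewrite d1 //.
  have [d2 _] := disc3 hd x y (top A); rewrite d2 //.
  have [_ d3] := disc3 hd x x (top A); exact: d3.
by move: (agE [::] isT); rewrite /= Exy Exx hb ht.
Qed.

Lemma sig_eq (T : Type) (P : T -> Prop) (p q : {x : T | P x}) :
  proj1_sig p = proj1_sig q -> p = q.
Proof. by case: p q => [x hx] [y hy] /= E; subst y; rewrite (Prop_irrelevance hx hy). Qed.

Notation Code F D := ({set D} * {ffun D * D -> D} * {ffun D * D -> D} * {ffun F * D -> D} * D * D)%type.

Section Codes.
Variables (F : finType) (pos : pred F) (D : finType).

Definition cS (c : Code F D) : {set D} := c.1.1.1.1.1.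
Definition cj (c : Code F D) x y := c.1.1.1.1.2 (x, y).
Definition cm (c : Code F D) x y := c.1.1.1.2 (x, y).
Definition co (c : Code F D) f x := c.1.1.2 (f, x).
Definition cb (c : Code F D) := c.1.2.
Definition ct (c : Code F D) := c.2.

Record valid (c : Code F D) : Prop := {
  vj : forall x y, x \in cS c -> y \in cS c -> cj c x y \in cS c;
  vm : forall x y, x \in cS c -> y \in cS c -> cm c x y \in cS c;
  vo : forall f x, x \in cS c -> co c f x \in cS c;
  vb : cb c \in cS c;
  vt : ct c \in cS c;
  aJA : forall x y z, x \in cS c -> y \in cS c -> z \in cS c ->
     cj c x (cj c y z) = cj c (cj c x y) z;
  aMA : forall x y z, x \in cS c -> y \in cS c -> z \in cS c ->
     cm c x (cm c y z) = cm c (cm c x y) z;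
  aJC : forall x y, x \in cS c -> y \in cS c -> cj c x y = cj c y x;
  aMC : forall x y, x \in cS c -> y \in cS c -> cm c x y = cm c y x;
  aJMK : forall x y, x \in cS c -> y \in cS c -> cj c x (cm c x y) = x;
  aMJK : forall x y, x \in cS c -> y \in cS c -> cm c x (cj c x y) = x;
  aMJD : forall x y z, x \in cS c -> y \in cS c -> z \in cS c ->
     cm c x (cj c y z) = cj c (cm c x y) (cm c x z);
  aJ0 : forall x, x \in cS c -> cj c (cb c) x = x;
  aM1 : forall x, x \in cS c -> cm c (ct c) x = x;
  aPJ : forall f x y, pos f -> x \in cS c -> y \in cS c -> co c f (cj c x y) = cj c (co c f x) (co c f y);
  aPM : forall f x y, pos f -> x \in cS c -> y \in cS c -> co c f (cm c x y) = cm c (co c f x) (co c f y);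
  aPB : forall f, pos f -> co c f (cb c) = cb c;
  aPT : forall f, pos f -> co c f (ct c) = ct c;
  aNJ : forall f x y, ~~ pos f -> x \in cS c -> y \in cS c -> co c f (cj c x y) = cm c (co c f x) (co c f y);
  aNM : forall f x y, ~~ pos f -> x \in cS c -> y \in cS c -> co c f (cm c x y) = cj c (co c f x) (co c f y);
  aNB : forall f, ~~ pos f -> co c f (cb c) = ct c;
  aNT : forall f, ~~ pos f -> co c f (ct c) = cb c
}.

Section Build.
Variables (c : Code F D) (hv : valid c).
Definition Bc := {x : D | x \in cS c}.
Definition bj (p q : Bc) : Bc := exist _ (cj c (sval p) (sval q)) (vj hv (svalP p) (svalP q)).
Definition bm (p q : Bc) : Bc := exist _ (cm c (sval p) (sval q)) (vm hv (svalP p) (svalP q)).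
Definition bo f (p : Bc) : Bc := exist _ (co c f (sval p)) (vo hv f (svalP p)).
Definition bb : Bc := exist _ (cb c) (vb hv).
Definition bt : Bc := exist _ (ct c) (vt hv).

Ltac bs := intros; apply: (@sig_eq D (fun x => x \in cS c)); rewrite /=.
Lemma BjoinA p q r : bj p (bj q r) = bj (bj p q) r.
Proof. bs; exact: (aJA hv (svalP p) (svalP q) (svalP r)). Qed.
Lemma BmeetA p q r : bm p (bm q r) = bm (bm p q) r.
Proof. bs; exact: (aMA hv (svalP p) (svalP q) (svalP r)). Qed.
Lemma BjoinC p q : bj p q = bj q p.
Proof. bs; exact: (aJC hv (svalP p) (svalP q)). Qed.
Lemma BmeetC p q : bm p q = bm q p.
Proof. bs; exact: (aMC hv (svalP p) (svalP q)). Qed.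
Lemma Bjoin_meetK p q : bj p (bm p q) = p.
Proof. bs; exact: (aJMK hv (svalP p) (svalP q)). Qed.
Lemma Bmeet_joinK p q : bm p (bj p q) = p.
Proof. bs; exact: (aMJK hv (svalP p) (svalP q)). Qed.
Lemma Bmeet_joinDr p q r : bm p (bj q r) = bj (bm p q) (bm p r).
Proof. bs; exact: (aMJD hv (svalP p) (svalP q) (svalP r)). Qed.
Lemma Bjoin0x p : bj bb p = p.
Proof. bs; exact: (aJ0 hv (svalP p)). Qed.
Lemma Bmeet1x p : bm bt p = p.
Proof. bs; exact: (aM1 hv (svalP p)). Qed.
Lemma Bop_pos_join f p q : pos f -> bo f (bj p q) = bj (bo f p) (bo f q).
Proof. move=> hf; bs; exact: (aPJ hv hf (svalP p) (svalP q)). Qed.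
Lemma Bop_pos_meet f p q : pos f -> bo f (bm p q) = bm (bo f p) (bo f q).
Proof. move=> hf; bs; exact: (aPM hv hf (svalP p) (svalP q)). Qed.
Lemma Bop_pos_bot f : pos f -> bo f bb = bb.
Proof. move=> hf; bs; exact: (aPB hv hf ). Qed.
Lemma Bop_pos_top f : pos f -> bo f bt = bt.
Proof. move=> hf; bs; exact: (aPT hv hf ). Qed.
Lemma Bop_neg_join f p q : ~~ pos f -> bo f (bj p q) = bm (bo f p) (bo f q).
Proof. move=> hf; bs; exact: (aNJ hv hf (svalP p) (svalP q)). Qed.
Lemma Bop_neg_meet f p q : ~~ pos f -> bo f (bm p q) = bj (bo f p) (bo f q).
Proof. move=> hf; bs; exact: (aNM hv hf (svalP p) (svalP q)). Qed.
Lemma Bop_neg_bot f : ~~ pos f -> bo f bb = bt.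
Proof. move=> hf; bs; exact: (aNB hv hf ). Qed.
Lemma Bop_neg_top f : ~~ pos f -> bo f bt = bb.
Proof. move=> hf; bs; exact: (aNT hv hf ). Qed.

Definition build : CornishAlg pos :=
  Build_CornishAlg BjoinA BmeetA BjoinC BmeetC Bjoin_meetK Bmeet_joinK Bmeet_joinDr
    Bjoin0x Bmeet1x Bop_pos_join Bop_pos_meet Bop_pos_bot Bop_pos_top
    Bop_neg_join Bop_neg_meet Bop_neg_bot Bop_neg_top.

Definition optB (z : D) : option Bc :=
  match pselect (z \in cS c) with left h => Some (exist _ z h) | right _ => None end.

Lemma build_finite : finite_alg build.
Proof.
exists (pmap optB (enum D)) => p.
have : sval p \in enum D by rewrite mem_enum.
elim: (enum D) => //= z s IH; rewrite inE => /orP[/eqP E|/IH h].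
  rewrite /optB; case: pselect => [hz|]; last by rewrite -E (svalP p).
  by rewrite /=; left; apply: sig_eq.
by case: (optB z) => //= y; right.
Qed.
End Build.
End Codes.

Lemma In_pmap_inv (aT rT : Type) (f : aT -> option rT) s y :
  List.In y (pmap f s) -> exists x, f x = Some y.
Proof.
elim: s => //= x s IH; case E: (f x) => [z|] //= [<-|/IH] //.
by exists x.
Qed.

Lemma In_pmap (aT : eqType) (rT : Type) (f : aT -> option rT) s x y :
  f x = Some y -> x \in s -> List.In y (pmap f s).
Proof.
move=> fx; elim: s => //= z s IH; rewrite inE => /orP[/eqP <-|/IH h].
  by rewrite fx /=; left.
by case: (f z) => //= w; right.
Qed.

Lemma disc_transfer (F : finType) (pos : pred F) (A B : CornishAlg pos) (g : A -> B) t :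
  hom g -> injective g -> (forall b, exists a, g a = b) ->
  induces_discriminator A t -> induces_discriminator B t.
Proof.
move=> hg ig sg hd rho.
pose r i := proj1_sig (cid (sg (rho i))).
have hr i : g (r i) = rho i by rewrite /r; case: cid.
have -> : rho = (fun i => g (r i)) by apply: funext => i; rewrite hr.
rewrite -eval_hom //=; case: (hd r) => /= h1 h2; split.
  by move=> ne; rewrite h1 // => E; apply: ne; rewrite E.
by move=> /ig E; rewrite h2.
Qed.

Theorem theorem5p6 (F : finType) (pos : pred F) (V : CornishAlg pos -> Prop) :
  discriminator_variety V ->
  exists (K : list (CornishAlg pos)) (t : term F 'I_3),
    (forall A, List.In A K -> quasi_primal A /\ induces_discriminator A t) /\
    (forall A, V A <-> generated_variety (fun B => List.In B K) A).
Proof.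
case=> [[Sigma hSig] [t ht]].
pose D : finType := code_space t.
pose dec (c : Code F D) : option (CornishAlg pos) :=
  match pselect (valid pos c) with
  | left hv => if pselect (V (build hv) /\ induces_discriminator (build hv) t)
               then Some (build hv) else None
  | right _ => None end.
pose K := pmap dec (enum {: Code F D}).
have InK B : List.In B K -> exists (c : Code F D) (hv : valid pos c),
    [/\ B = build hv, V B & induces_discriminator B t].
  move=> hB; have [c] := In_pmap_inv hB; rewrite /dec; case: pselect => // hv.
  by case: pselect => // [[h1 h2]] [<-]; exists c, hv.
exists K, t; split.
  move=> B /InK [c [hv [-> _ hd]]]; split => //; split => //.
    exact: build_finite.
  by exists t.
move=> A; split; last first.
  move=> gA; apply/hSig => e he; apply: gA => B /InK [c [hv [_ VB _]]].
  by move/hSig: VB; apply.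
move=> VA e hK rho.
case: (pselect (eval rho e.1 = eval rho e.2)) => // nab; exfalso.
set a := eval rho e.1 in nab; set b := eval rho e.2 in nab.
have [th [cth nth maxth]] := max_cong nab.
pose Q := Qalg cth.
have piH : hom (qpi cth : A -> Q) := qpi_hom cth.
have piS : forall p : Q, exists x, qpi cth x = p := @qpi_surj _ _ _ _ cth.
have VQ : V Q.
  apply/hSig => e' he'; apply: (hom_surj_sat piH piS).
  by move/hSig: VA; apply.
have nQ : qpi cth a <> qpi cth b by move/qpiE.
have SIQ : subdirectly_irreducible Q.
  exists (qpi cth a), (qpi cth b); split => // Th cTh [p [q [hpq npq]]].
  have := maxth _ (lift_cong cTh).
  apply.
  - by move=> x y /(qpiE cth) ->; case: cTh.
  - exists (proj1_sig p), (proj1_sig q); rewrite !qpi_val; split => //.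
    by move=> /(qpiE cth); rewrite !qpi_val.
have dQ : induces_discriminator Q t by exact: ht.
have ntQ : bot Q <> top Q by move=> /bot_top_trivial E; apply: nQ; apply: E.
have [iota iinj] := embed dQ ntQ.
pose S : {set D} := [set z | `[< exists q, iota q = z >]].
pose inv (z : D) : Q := match pselect (exists q, iota q = z) with
  | left h => proj1_sig (cid h) | right _ => qpi cth a end.
have invK q : inv (iota q) = q.
  rewrite /inv; case: pselect => [h|[]]; last by exists q.
  by case: cid => /= q' /iinj.
have inS q : iota q \in S by rewrite inE; apply/asboolP; exists q.
have SE z : z \in S -> exists q, z = iota q.
  by rewrite inE => /asboolP [q <-]; exists q.
pose c : Code F D := (S, [ffun zz : D * D => iota (join (inv zz.1) (inv zz.2))],
  [ffun zz : D * D => iota (meet (inv zz.1) (inv zz.2))],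
  [ffun fz : F * D => iota (op fz.1 (inv fz.2))], iota (bot Q), iota (top Q)).
have cjE p q : cj c (iota p) (iota q) = iota (join p q) by rewrite /cj /= ffunE /= !invK.
have cmE p q : cm c (iota p) (iota q) = iota (meet p q) by rewrite /cm /= ffunE /= !invK.
have coE f p : co c f (iota p) = iota (op f p) by rewrite /co /= ffunE /= !invK.
have cbE : cb c = iota (bot Q) by [].
have ctE : ct c = iota (top Q) by [].
have cSE : cS c = S by [].
have hv : valid pos c.
{ split; rewrite ?cSE.
  all: repeat (let z := fresh "z" in move=> z;
         first [ move/SE: z => [? ->] | idtac ]).
  all: rewrite ?cjE ?cmE ?coE ?cbE ?ctE ?cjE ?cmE ?coE ?cjE ?cmE ?coE //.
  all: try (by apply: inS).
  all: congr iota.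
  all: first [ exact: joinA | exact: meetA | exact: joinC | exact: meetC
             | exact: join_meetK | exact: meet_joinK | exact: meet_joinDr
             | exact: join0x | exact: meet1x
             | (apply: op_pos_join; assumption) | (apply: op_pos_meet; assumption)
             | (apply: op_pos_bot; assumption) | (apply: op_pos_top; assumption)
             | (apply: op_neg_join; assumption) | (apply: op_neg_meet; assumption)
             | (apply: op_neg_bot; assumption) | (apply: op_neg_top; assumption) ]. }
pose phi (q : Q) : build hv := exist _ (iota q) (inS q).
have phiH : hom phi.
  split.
  - by move=> p q; apply: sig_eq => /=; rewrite cjE.
  - by move=> p q; apply: sig_eq => /=; rewrite cmE.
  - by move=> f p; apply: sig_eq => /=; rewrite coE.
  - by apply: sig_eq.
  - by apply: sig_eq.
have phiI : injective phi by move=> p q /(congr1 (@proj1_sig _ _)) /iinj.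
have phiS : forall bb : build hv, exists q, phi q = bb.
  move=> [z hz]; have [q E] := SE z hz; exists q; apply: sig_eq => /=; by rewrite E.
have VB : V (build hv).
  apply/hSig => e' he'; apply: (hom_surj_sat phiH phiS).
  by move/hSig: VQ; apply.
have dB : induces_discriminator (build hv) t := disc_transfer phiH phiI phiS dQ.
have InKB : List.In (build hv) K.
  apply: (@In_pmap _ _ dec _ c); last by rewrite mem_enum.
  rewrite /dec; case: pselect => [hv'|//].
  rewrite (Prop_irrelevance hv' hv); case: pselect => // [[]]; by split.
have sQ : satisfies Q e := hom_inj_sat phiH phiI (hK _ InKB).
move: (sQ (fun n => qpi cth (rho n))); rewrite -!eval_hom //.
Qed.
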